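(* There exists a constant $c>0$ such that for every integer $k\geq 2$ and every graph $G$ with $\operatorname{pw}(G)\geq ck^5\log^{5/2}(k)$, we have $\operatorname{pw}(G\times K_2)\geq k$.
   Context: $\operatorname{pw}$ denotes pathwidth. The direct product $G \times H$ has vertex set $V(G)\times V(H)$, with $(a,v)(b,u)$ an edge iff $ab\in E(G)$ and $uv\in E(H)$; $K_2$ is the graph with two adjacent vertices. *)

(* Defs.v *)
From Stdlib Require Import ClassicalEpsilon.
From mathcomp Require Import all_boot.
Set Implicit Arguments. Unset Strict Implicit. Unset Printing Implicit Defensive.

Definition is_path_decomp (T : finType) (e : rel T) (s : seq {set T}) : Prop :=
  [/\ (forall v : T, exists2 B, B \in s & v \in B),
      (forall u v : T, e u v -> exists2 B, B \in s & (u \in B) && (v \in B)) &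
      (forall (v : T) (i j l : nat), i <= j -> j <= l ->
         v \in nth set0 s i -> v \in nth set0 s l -> v \in nth set0 s j)].

Definition width_le (T : finType) (s : seq {set T}) (w : nat) : Prop :=
  forall B, B \in s -> #|B| <= w.+1.

Definition has_pw_le (T : finType) (e : rel T) (w : nat) : Prop :=
  exists s, is_path_decomp e s /\ width_le s w.

Definition has_pw_leb (T : finType) (e : rel T) (w : nat) : bool :=
  if excluded_middle_informative (has_pw_le e w) then true else false.

Lemma has_pw_le_full (T : finType) (e : rel T) : has_pw_le e #|T|.
Proof.
exists [:: setT]; split; last by move=> B; rewrite inE => /eqP ->; rewrite cardsT.
split.
- by move=> v; exists setT; rewrite ?inE.
- by move=> u v _; exists setT; rewrite ?inE.
- move=> v i j l _ Hjl _ Hl.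
  case: l Hjl Hl => [|l]; last by rewrite /= nth_nil inE.
  by case: j.
Qed.

Lemma has_pw_leb_ex (T : finType) (e : rel T) : exists w, has_pw_leb e w.
Proof.
exists #|T|; rewrite /has_pw_leb.
case: excluded_middle_informative => // H.
by case: (H (has_pw_le_full e)).
Qed.

Definition pw (T : finType) (e : rel T) : nat := ex_minn (has_pw_leb_ex e).

Definition dprodK2 (T : finType) (e : rel T) : rel (T * bool)%type :=
  fun p q => e p.1 q.1 && (p.2 != q.2).

(* Main.v *)
Require Import Defs.
From mathcomp Require Import all_boot.
From Stdlib Require Import Reals ClassicalEpsilon Lra.

Section Key.
Variables (T : finType) (e : rel T) (s : seq {set (T * bool)%type}).
Hypothesis Hs : is_path_decomp (dprodK2 e) s.

Let P (u : T) := fun B : {set (T * bool)%type} => ((u, false) \in B) || ((u, true) \in B).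
Let f (u : T) := find (P u) s.
Let g (u : T) := maxn (f u) (\max_(v | e u v || e v u) f v).
Let C (t : nat) := [set u | (f u <= t) && (t <= g u)].
Let n := size s.

Lemma hasP_u u : has (P u) s.
Proof.
case: Hs => Hc _ _; case: (Hc (u, false)) => B HB HuB.
by apply/hasP; exists B => //; rewrite /P HuB.
Qed.

Lemma f_lt u : f u < n.
Proof. by rewrite /f /n -has_find hasP_u. Qed.

Lemma g_lt u : g u < n.
Proof.
rewrite /g gtn_max; apply/andP; split; first exact: f_lt.
have Hn : 0 < n by apply: leq_ltn_trans (f_lt u).
rewrite -(prednK Hn) ltnS.
by apply/bigmax_leqP => v _; rewrite -ltnS (prednK Hn); apply: f_lt.
Qed.

Lemma copy_in u t : t < n -> u \in C t ->
  ((u, false) \in nth set0 s t) || ((u, true) \in nth set0 s t).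
Proof.
move=> Htn; rewrite inE => /andP [Hf Hg].
case: Hs => _ He Hi.
have Hfu := nth_find set0 (hasP_u u).
rewrite leq_eqVlt in Hf; case/orP: Hf => [/eqP <- //|Hlt].
have Hgt : t <= \max_(v | e u v || e v u) f v.
  by move: Hg; rewrite /g leq_max leqNgt Hlt.
have [v Hv Hfv] : exists2 v, e u v || e v u & t <= f v.
  case: (boolP [exists (x | e u x || e x u), t <= f x]) => [/exists_inP //|Hno].
  exfalso.
  have : \max_(v | e u v || e v u) f v <= t.-1.
    apply/bigmax_leqP => v Hv; have Ht0 : 0 < t by apply: leq_ltn_trans Hlt.
    rewrite -ltnS (prednK Ht0).
    by rewrite ltnNge; apply/negP => H; move/negP: Hno; apply; apply/exists_inP; exists v.
  move=> Hm; have := leq_trans Hgt Hm.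
  by case: (t) Hlt => // t' _ /=; rewrite ltnn.
have [a Ha] : exists a, (u, a) \in nth set0 s (f u).
  by case/orP: Hfu => H; [exists false|exists true].
have Hedge : exists2 B, B \in s & ((u, a) \in B) && ((v, ~~ a) \in B).
  case/orP: Hv => Hv.
    by apply: He; rewrite /dprodK2 /= Hv; case: a {Ha}.
  have [B HB HBuv] : exists2 B, B \in s & ((v, ~~ a) \in B) && ((u, a) \in B).
    by apply: He; rewrite /dprodK2 /= Hv; case: a {Ha}.
  by exists B => //; rewrite andbC.
case: Hedge => B HB /andP [HuB HvB].
set l := index B s.
have HBl : nth set0 s l = B by rewrite nth_index.
have Hfl : f v <= l.
  rewrite leqNgt; apply/negP => H.
  have := before_find set0 H; rewrite HBl /P /=.
  by case: a Ha HuB HvB => _ _ ->; rewrite ?orbT.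
have : (u, a) \in nth set0 s t.
  apply: (Hi _ (f u) t l); [exact: ltnW|exact: leq_trans Hfv Hfl|done|by rewrite HBl].
by case: a {Ha HuB HvB} => ->; rewrite ?orbT.
Qed.

Lemma key_decomp w : width_le s w -> is_path_decomp e (mkseq C n) /\ width_le (mkseq C n) w.
Proof.
move=> Hw; split; first split.
- move=> u; exists (C (f u)).
    by apply/mapP; exists (f u); rewrite ?mem_iota ?f_lt.
  by rewrite /C inE leqnn /g leq_maxl.
- move=> u v Huv.
  case: (leqP (f u) (f v)) => H.
    exists (C (f v)); first by apply/mapP; exists (f v); rewrite ?mem_iota ?f_lt.
    rewrite /C !inE H leqnn /g leq_maxl /=.
    by rewrite (leq_trans _ (leq_maxr _ _)) //; apply: leq_bigmax_cond; rewrite Huv.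
  exists (C (f u)); first by apply/mapP; exists (f u); rewrite ?mem_iota ?f_lt.
  rewrite /C !inE (ltnW H) leqnn /g leq_maxl /=.
  by rewrite (leq_trans _ (leq_maxr _ _)) //; apply: leq_bigmax_cond; rewrite Huv orbT.
- move=> v i j l Hij Hjl.
  case: (ltnP l n) => Hl; last by move=> _; rewrite nth_default ?size_mkseq // inE.
  have Hin : i < n by apply: leq_ltn_trans Hl; apply: leq_trans Hjl.
  have Hjn : j < n by apply: leq_ltn_trans Hl.
  rewrite !nth_mkseq // /C !inE => /andP [Hi1 _] /andP [_ Hl2].
  by rewrite (leq_trans Hi1 Hij) (leq_trans Hjl Hl2).
- move=> B /mapP [t]; rewrite mem_iota add0n => /andP [_ Htn] ->.
  pose phi u := (u, ~~ ((u, false) \in nth set0 s t)).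
  have phi_inj : injective phi by move=> x y [].
  rewrite -(card_imset _ phi_inj).
  apply: leq_trans (Hw _ (mem_nth set0 Htn)).
  apply: subset_leq_card; apply/subsetP => p /imsetP [u Hu ->].
  have := @copy_in u t Htn Hu; rewrite /phi.
  by case E: ((u, false) \in nth set0 s t) => /=; rewrite ?E.
Qed.
End Key.

Lemma pw_le (T : finType) (e : rel T) : pw e <= pw (dprodK2 e).
Proof.
rewrite /pw; case: ex_minnP => m Hm Hmin; case: ex_minnP => w Hw _.
apply: Hmin; move: Hw; rewrite /has_pw_leb.
case: excluded_middle_informative => // [[s [Hs Hws]]] _.
case: excluded_middle_informative => // H; exfalso; apply: H.
by eexists; apply: (@key_decomp T e s Hs w Hws).
Qed.

Open Scope R_scope.

Theorem mainTheorem16 :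
  exists c : R, 0 < c /\
    forall (k : nat), (2 <= k)%nat ->
    forall (T : finType) (e : rel T), symmetric e -> irreflexive e ->
      c * INR k ^ 5 * Rpower (ln (INR k)) (5 / 2) <= INR (pw e) ->
      (k <= pw (dprodK2 e))%nat.
Proof.
have Rp : forall x y, 0 < Rpower x y by move=> x y; unfold Rpower; apply: exp_pos.
have l2 : 0 < ln 2 by have := ln_lt_2; lra.
exists (/ Rpower (ln 2) (5 / 2)); split; first by apply: Rinv_0_lt_compat.
move=> k Hk T e _ _ H.
apply: (@leq_trans (pw e)); last exact: pw_le.
apply/leP; apply: INR_le; apply: Rle_trans H.
have Hk2 : 2 <= INR k.
have X := le_INR _ _ (elimT leP Hk); change (INR 2) with (1+1) in X.

lra.
have Hl : ln 2 <= ln (INR k).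
  case: (Rle_lt_or_eq_dec _ _ Hk2) => [Hlt|<-]; last by apply: Rle_refl.
  by apply: Rlt_le; apply: ln_increasing; lra.
have Hp : Rpower (ln 2) (5 / 2) <= Rpower (ln (INR k)) (5 / 2).
  by apply: Rle_Rpower_l; lra.
have Hc : 1 <= / Rpower (ln 2) (5 / 2) * Rpower (ln (INR k)) (5 / 2).
  have := Rp (ln 2) (5/2) => Hpos.
  rewrite -(Rinv_l (Rpower (ln 2) (5 / 2))); last by lra.
  by apply: Rmult_le_compat_l => //; apply: Rlt_le; apply: Rinv_0_lt_compat.
have Hk5 : INR k <= INR k ^ 5.
  rewrite -{1}(pow_1 (INR k)); apply: Rle_pow; [lra | by apply/leP].
have Hk0 : 0 <= INR k ^ 5 by apply: pow_le; lra.
have : INR k ^ 5 * 1 <= INR k ^ 5 * (/ Rpower (ln 2) (5 / 2) * Rpower (ln (INR k)) (5 / 2)).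
  by apply: Rmult_le_compat_l.
nra.
Qed.
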